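(* In the setting below, for every face $F$ of $\mathcal{P}_\lambda$, every edge of $\phi(F)$ lies on some positive path of $\Gamma_{\mathbf{k}}$ that is entirely contained in $\phi(F)$.
   Context: Let $\mathbf{k}=(k_1,\dots,k_s)$ be positive integers with sum $n$, $n_0=0$, $n_i=\sum_{j\le i}k_j$, and $\lambda=(\lambda_1,\dots,\lambda_n)$ real with $\lambda_1=\cdots=\lambda_{n_1}>\lambda_{n_1+1}=\cdots=\lambda_{n_2}>\cdots>\lambda_{n_{s-1}+1}=\cdots=\lambda_n$. Let $I=\{(i,j)\in\mathbb{Z}^2:i,j\ge1,i+j\le n\}$; $\mathcal{P}_\lambda=\{x=(x_{i,j})_{(i,j)\in I}: x_{i,j+1}\ge x_{i,j}\ge x_{i+1,j}\ \forall (i,j)\in I\}$ with $x_{i,n+1-i}:=\lambda_i$. $Q^+$ is the directed graph on $\mathbb{Z}_{\ge0}^2$ with edges $((i,j),(i,j+1))$, $((i,j),(i+1,j))$. Terminal vertices $T_{\mathbf{k}}=\{(n_\ell,n-n_\ell):0\le\ell\le s\}$; $\Gamma_{\mathbf{k}}$ is the induced subgraph of $Q^+$ on $\{(a,b):a\le c,b\le d\text{ for some }(c,d)\in T_{\mathbf{k}}\}$. A positive path is a shortest directed path in $\Gamma_{\mathbf{k}}$ from $(0,0)$ to a terminal vertex. For a face $F$ of $\mathcal{P}_\lambda$, $\phi(F)$ is the subgraph of $Q^+$ whose edges are: all $((0,i),(0,i+1))$ and $((i,0),(i+1,0))$, $0\le i\le n-1$; $((i-1,j),(i,j))$ for $(i,j)\in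 I$ whenever some $x\in F$ has $x_{i,j}<x_{i,j+1}$; $((i,j-1),(i,j))$ for $(i,j)\in I$ whenever some $x\in F$ has $x_{i,j}>x_{i+1,j}$; its vertices are the endpoints of these edges. *)

(* Defs.v *)
From HB Require Import structures.
From mathcomp Require Import all_boot all_order all_algebra.
Set Implicit Arguments. Unset Strict Implicit. Unset Printing Implicit Defensive.
Import Order.TTheory GRing.Theory Num.Theory.

(* n_l = k_1 + ... + k_l  (n_0 = 0) *)
Definition psum (k : seq nat) (l : nat) : nat := \sum_(j < l) nth 0%N k j.

Definition terminal (k : seq nat) (n : nat) (v : nat * nat) : bool :=
  has (fun l => v == (psum k l, n - psum k l)) (iota 0 (size k).+1).

Definition in_Gamma (k : seq nat) (n : nat) (v : nat * nat) : bool :=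
  has (fun l => (v.1 <= psum k l) && (v.2 <= n - psum k l)) (iota 0 (size k).+1).

Definition Qedge (u v : nat * nat) : bool :=
  (v == (u.1, u.2.+1)) || (v == (u.1.+1, u.2)).

Definition Gedge (k : seq nat) (n : nat) (u v : nat * nat) : bool :=
  [&& Qedge u v, in_Gamma k n u & in_Gamma k n v].

(* a directed path in Gamma_k from (0,0) given by its vertex list after (0,0) *)
Definition Gpath (k : seq nat) (n : nat) (p : seq (nat * nat)) : bool :=
  path (Gedge k n) (0, 0)%N p.

Definition positive_path (k : seq nat) (n : nat) (p : seq (nat * nat)) : Prop :=
  [/\ Gpath k n p, terminal k n (last (0, 0)%N p) &
      forall q, Gpath k n q -> last (0, 0)%N q = last (0, 0)%N p ->
        (size p <= size q)%N].

Definition edge_on (p : seq (nat * nat)) (u v : nat * nat) : bool :=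
  (u, v) \in zip ((0, 0)%N :: p) p.

Definition inI (n i j : nat) : bool := [&& (0 < i)%N, (0 < j)%N & (i + j <= n)%N].

Section Poly.
Variable R : realFieldType.
Local Open Scope ring_scope.

(* points are functions nat -> nat -> R, required to vanish outside I *)
Definition point := nat -> nat -> R.

Definition xe (n : nat) (lam : nat -> R) (x : point) (i j : nat) : R :=
  if (i + j == n.+1)%N then lam i else x i j.

Definition inP (n : nat) (lam : nat -> R) (x : point) : Prop :=
  (forall i j, ~~ inI n i j -> x i j = 0) /\
  (forall i j, inI n i j ->
     xe n lam x i j <= xe n lam x i j.+1 /\ xe n lam x i.+1 j <= xe n lam x i j).

Definition linf (n : nat) (w x : point) : R :=
  \sum_(i < n) \sum_(j < n) (if inI n i j then w i j * x i j else 0).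

Definition is_face (n : nat) (lam : nat -> R) (F : point -> Prop) : Prop :=
  (exists w c, (forall x, inP n lam x -> linf n w x <= c) /\
               (forall x, F x <-> (inP n lam x /\ linf n w x = c))) /\
  (exists x, F x).

Definition phiE (n : nat) (lam : nat -> R) (F : point -> Prop) (u v : nat * nat) : Prop :=
  (exists i, (i < n)%N /\ u = (0, i)%N /\ v = (0, i.+1)%N) \/
  (exists i, (i < n)%N /\ u = (i, 0)%N /\ v = (i.+1, 0)%N) \/
  (exists i j, inI n i j /\ u = (i.-1, j) /\ v = (i, j) /\
     exists x, F x /\ xe n lam x i j < xe n lam x i j.+1) \/
  (exists i j, inI n i j /\ u = (i, j.-1) /\ v = (i, j) /\
     exists x, F x /\ xe n lam x i.+1 j < xe n lam x i j).

End Poly.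

Definition lam_adapted (R : realFieldType) (k : seq nat) (n : nat) (lam : nat -> R) : Prop :=
  forall i, (0 < i)%N -> (i < n)%N ->
    (i \in [seq psum k l | l <- iota 1 (size k)] -> (lam i.+1 < lam i)%R) /\
    (i \notin [seq psum k l | l <- iota 1 (size k)] -> lam i.+1 = lam i).

(* Main.v *)
Require Import Defs.
From HB Require Import structures.
From mathcomp Require Import all_boot all_order all_algebra.
From mathcomp Require Import zify lra.
Set Implicit Arguments. Unset Strict Implicit. Unset Printing Implicit Defensive.
Import Order.TTheory GRing.Theory Num.Theory.

Definition gE (R : realFieldType) (n : nat) (lam : nat -> R) (x : point R)
  (u v : nat * nat) : bool :=
  [|| [&& u.1 == 0%N, v == (0%N, u.2.+1) & (u.2 < n)%N],
      [&& u.2 == 0%N, v == (u.1.+1, 0%N) & (u.1 < n)%N],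
      [&& v == (u.1.+1, u.2), inI n v.1 v.2 &
          (xe n lam x v.1 v.2 < xe n lam x v.1 v.2.+1)%R]
    | [&& v == (u.1, u.2.+1), inI n v.1 v.2 &
          (xe n lam x v.1.+1 v.2 < xe n lam x v.1 v.2)%R] ].


Lemma gE_inv R n lam (x : point R) a b c d : gE n lam x (a,b) (c,d) ->
 [\/ [/\ a = 0%N, c = 0%N, d = b.+1 & (b < n)%N],
     [/\ b = 0%N, c = a.+1, d = 0%N & (a < n)%N],
     [/\ c = a.+1, d = b, inI n c d & (xe n lam x c d < xe n lam x c d.+1)%R]
   | [/\ c = a, d = b.+1, inI n c d & (xe n lam x c.+1 d < xe n lam x c d)%R]].
Proof.
rewrite /gE /=; case/or4P => /and3P [h1 h2 h3].
- move/eqP: h1 => h1; move/eqP: h2 => [? ?]; subst; by apply: Or41.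
- move/eqP: h1 => h1; move/eqP: h2 => [? ?]; subst; by apply: Or42.
- move/eqP: h1 => [? ?]; subst; by apply: Or43.
- move/eqP: h1 => [? ?]; subst; by apply: Or44.
Qed.

Lemma gE_ax1 R n lam (x : point R) b : (b < n)%N -> gE n lam x (0%N,b) (0%N,b.+1).
Proof. by move=> h; apply/or4P; constructor 1; rewrite /= !eqxx h. Qed.
Lemma gE_ax2 R n lam (x : point R) a : (a < n)%N -> gE n lam x (a,0%N) (a.+1,0%N).
Proof. by move=> h; apply/or4P; constructor 2; rewrite /= !eqxx h. Qed.
Lemma gE_v R n lam (x : point R) a b : inI n a.+1 b ->
  (xe n lam x a.+1 b < xe n lam x a.+1 b.+1)%R -> gE n lam x (a,b) (a.+1,b).
Proof. by move=> h1 h2; apply/or4P; constructor 3; rewrite /= !eqxx h1 h2. Qed.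
Lemma gE_h R n lam (x : point R) a b : inI n a b.+1 ->
  (xe n lam x a.+1 b.+1 < xe n lam x a b.+1)%R -> gE n lam x (a,b) (a,b.+1).
Proof. by move=> h1 h2; apply/or4P; constructor 4; rewrite /= !eqxx h1 h2. Qed.

Lemma gE_shape R n lam (x : point R) a b c d : gE n lam x (a,b) (c,d) ->
  [/\ (c + d = (a + b).+1)%N, (a <= c)%N, (b <= d)%N & (c + d <= n)%N].
Proof.
case/gE_inv => [[-> -> -> h]|[-> -> -> h]|[-> -> /and3P[h1 h2 h3] _]|[-> -> /and3P[h1 h2 h3] _]];
 split; lia.
Qed.

Definition Pineq R n lam (x : point R) :=
  forall i j, inI n i j -> (xe n lam x i j <= xe n lam x i j.+1)%R /\
                           (xe n lam x i.+1 j <= xe n lam x i j)%R.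

Lemma inI_intro n i j : (0 < i)%N -> (0 < j)%N -> (i + j <= n)%N -> inI n i j.
Proof. by move=> h1 h2 h3; rewrite /inI h1 h2 h3. Qed.

Lemma back_good R n lam (x : point R) (hP : Pineq n lam x) a b c d :
  gE n lam x (a,b) (c,d) -> (a,b) = (0%N,0%N) \/ exists w, gE n lam x w (a,b).
Proof.
case/gE_inv => [[? ? ? h]|[? ? ? h]|[? ? /and3P[h1 h2 h3] hs]|[? ? /and3P[h1 h2 h3] hs]]; subst.
- case: b h => [|b] h; first by left.
  by right; exists (0%N, b); apply: gE_ax1; lia.
- case: a h => [|a] h; first by left.
  by right; exists (a, 0%N); apply: gE_ax2; lia.
- right. case: b h1 h2 h3 hs => [|b] h1 h2 h3 hs; first by [].
  case: a h1 h2 h3 hs => [|a] h1 h2 h3 hs.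
    by exists (0%N, b); apply: gE_ax1; lia.
  have [p1 p2] := hP a.+1 b.+1 (ltac:(apply: inI_intro; lia)).
  have [q1 q2] := hP a.+1 b.+2 (ltac:(apply: inI_intro; lia)).
  case: (ltP (xe n lam x a.+1 b.+1) (xe n lam x a.+1 b.+2)) => hc.
    by exists (a, b.+1); apply: gE_v => //; apply: inI_intro; lia.
  exists (a.+1, b); apply: gE_h; first by apply: inI_intro; lia.
  lra.
- right. case: a h1 h2 h3 hs => [|a] h1 h2 h3 hs; first by [].
  case: b h1 h2 h3 hs => [|b] h1 h2 h3 hs.
    by exists (a, 0%N); apply: gE_ax2; lia.
  have [p1 p2] := hP a.+1 b.+1 (ltac:(apply: inI_intro; lia)).
  have [q1 q2] := hP a.+2 b.+1 (ltac:(apply: inI_intro; lia)).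
  case: (ltP (xe n lam x a.+1 b.+1) (xe n lam x a.+1 b.+2)) => hc.
    by exists (a, b.+1); apply: gE_v => //; apply: inI_intro; lia.
  exists (a.+1, b); apply: gE_h; first by apply: inI_intro; lia.
  lra.
Qed.

Lemma xe_r R n lam (x : point R) i j : (i + j = n)%N -> xe n lam x i j.+1 = lam i.
Proof. by move=> h; rewrite /xe addnS h eqxx. Qed.
Lemma xe_d R n lam (x : point R) i j : (i + j = n)%N -> xe n lam x i.+1 j = lam i.+1.
Proof. by move=> h; rewrite /xe addSn h eqxx. Qed.

Lemma psum0 k : psum k 0 = 0%N.
Proof. by rewrite /psum big_ord0. Qed.

Lemma psum_size k : psum k (size k) = sumn k.
Proof. by rewrite /psum sumnE (big_nth 0%N) big_mkord. Qed.

Lemma term_int (R : realFieldType) k n (lam : nat -> R) (hlam : lam_adapted k n lam) i j :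
  (0 < i)%N -> (0 < j)%N -> (i + j = n)%N -> (lam i.+1 < lam i)%R ->
  terminal k n (i,j).
Proof.
move=> hi hj hij hl.
have [H1 H2] := hlam i hi (ltac:(lia)).
case: (boolP (i \in [seq psum k l | l <- iota 1 (size k)])) => hin; last first.
  by have := H2 hin; move=> e; rewrite e in hl; rewrite ltxx in hl.
case/mapP: hin => l hl' ei.
apply/hasP; exists l.
  by move: hl'; rewrite !mem_iota add1n add0n; case/andP => _ ->.
apply/eqP; congr pair => //; lia.
Qed.

Lemma fwd_step R k n lam (x : point R) (hP : Pineq n lam x)
  (hlam : lam_adapted k n lam) (hn : sumn k = n) a b c d :
  gE n lam x (a,b) (c,d) -> terminal k n (c,d) \/ exists w, gE n lam x (c,d) w.
Proof.
case/gE_inv => [[? ? ? h]|[? ? ? h]|[? ? /and3P[h1 h2 h3] hs]|[? ? /and3P[h1 h2 h3] hs]]; subst c; try subst d; try subst a; try subst b.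
- case: (boolP (b.+1 == n)) => e.
    left; apply/hasP; exists 0%N; first by rewrite mem_iota.
    by rewrite psum0 subn0 (eqP e).
  by right; exists (0%N, b.+2); apply: gE_ax1; lia.
- case: (boolP (a.+1 == n)) => e.
    left; apply/hasP; exists (size k); first by rewrite mem_iota; lia.
    by rewrite psum_size hn (eqP e) subnn.
  by right; exists (a.+2, 0%N); apply: gE_ax2; lia.
- have [p1 p2] := hP a.+1 b (inI_intro h1 h2 h3).
  case: (boolP (a.+1 + b == n)%N) => e.
    left; move/eqP: e => e; apply: (term_int hlam) => //.
    by rewrite (xe_r lam x e) in hs p1; rewrite (xe_d lam x e) in p2 hs; lra.
  have [q1 q2] := hP a.+1 b.+1 (ltac:(apply: inI_intro; lia)).
  have [r1 r2] := hP a.+2 b (ltac:(apply: inI_intro; lia)).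
  right.
  case: (ltP (xe n lam x a.+2 b) (xe n lam x a.+2 b.+1)) => hc.
    by exists (a.+2, b); apply: gE_v => //; apply: inI_intro; lia.
  exists (a.+1, b.+1); apply: gE_h; first by apply: inI_intro; lia.
  lra.
- have [p1 p2] := hP a b.+1 (inI_intro h1 h2 h3).
  case: (boolP (a + b.+1 == n)%N) => e.
    left; move/eqP: e => e; apply: (term_int hlam) => //.
    by rewrite (xe_r lam x e) in hs p1; rewrite (xe_d lam x e) in p2 hs; lra.
  have [q1 q2] := hP a b.+2 (ltac:(apply: inI_intro; lia)).
  have [r1 r2] := hP a.+1 b.+1 (ltac:(apply: inI_intro; lia)).
  right.
  case: (ltP (xe n lam x a.+1 b.+1) (xe n lam x a.+1 b.+2)) => hc.
    by exists (a.+1, b.+1); apply: gE_v => //; apply: inI_intro; lia.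
  exists (a, b.+2); apply: gE_h; first by apply: inI_intro; lia.
  lra.
Qed.

Lemma back_path R n lam (x : point R) (hP : Pineq n lam x) :
  forall m a b, (a + b = m)%N ->
  ((a,b) = (0%N,0%N) \/ exists w, gE n lam x w (a,b)) ->
  exists q, path (gE n lam x) (0%N,0%N) q /\ last (0%N,0%N) q = (a,b).
Proof.
elim=> [|m IH] a b hab hg.
  exists [::]; split => //=; congr pair; lia.
case: hg => [[ea eb]|[[c d] hw]]; first by subst; lia.
have [s1 _ _ _] := gE_shape hw.
have [q [hq hl]] := IH c d (ltac:(lia)) (back_good hP hw).
exists (rcons q (a,b)); rewrite rcons_path last_rcons hl hq; split => //.
Qed.

Lemma fwd_path R k n lam (x : point R) (hP : Pineq n lam x)
  (hlam : lam_adapted k n lam) (hn : sumn k = n) :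
  forall m c d, (n - (c + d) = m)%N -> (exists w, gE n lam x w (c,d)) ->
  exists q, path (gE n lam x) (c,d) q /\ terminal k n (last (c,d) q).
Proof.
elim=> [|m IH] c d hm [[a b] hw].
  case: (fwd_step hP hlam hn hw) => [ht|[[e f] he]]; first by exists [::].
  have [_ _ _ h1] := gE_shape hw.
  have [h2 _ _ h3] := gE_shape he.
  lia.
case: (fwd_step hP hlam hn hw) => [ht|[[e f] he]]; first by exists [::].
have [h2 _ _ h3] := gE_shape he.
have [q [hq hl]] := IH e f (ltac:(lia)) (ex_intro _ (c,d) he).
by exists ((e,f) :: q); rewrite /= he hq.
Qed.

Lemma path_le R n lam (x : point R) : forall s a, path (gE n lam x) a s ->
  forall y, y \in a :: s -> (y.1 <= (last a s).1)%N && (y.2 <= (last a s).2)%N.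
Proof.
elim=> [|b s IH] a /=.
  by move=> _ y; rewrite inE => /eqP ->; rewrite !leqnn.
case/andP => hab hp y; rewrite inE => /orP [/eqP ->|hy]; last exact: IH.
have := IH b hp b (mem_head _ _).
case: a hab => a1 a2; case: b hp => b1 b2 hp hab.
have [_ h1 h2 _] := gE_shape hab.
case/andP => /= h3 h4; apply/andP; split => /=; lia.
Qed.

Lemma path_G R k n lam (x : point R) : forall s a, path (gE n lam x) a s ->
  all (in_Gamma k n) (a :: s) -> path (Gedge k n) a s.
Proof.
elim=> [|b s IH] a //=.
case/andP => hab hp /and3P [ha hb hs].
rewrite IH ?hp /= ?hb ?hs // andbT /Gedge ha hb andbT.
case: a hab {ha} => a1 a2; case: b {hb hp} => b1 b2.
case/gE_inv => [[? ? ? h]|[? ? ? h]|[? ? _ _]|[? ? _ _]]; subst;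
  by rewrite /Qedge /= eqxx ?orbT.
Qed.

Lemma Gpath_size k n : forall q a, path (Gedge k n) a q ->
  ((last a q).1 + (last a q).2 = a.1 + a.2 + size q)%N.
Proof.
elim=> [|b q IH] a /=; first by rewrite addn0.
case/andP => /and3P [hq _ _] hp; rewrite IH //.
case/orP: hq => /eqP -> /=; lia.
Qed.

Lemma in_Gamma_le k n y t : terminal k n t -> (y.1 <= t.1)%N -> (y.2 <= t.2)%N ->
  in_Gamma k n y.
Proof.
case/hasP => l hl /eqP -> /= h1 h2; apply/hasP; exists l => //.
by rewrite h1 h2.
Qed.

Lemma pos_path R k n lam (x : point R) p : path (gE n lam x) (0%N,0%N) p ->
  terminal k n (last (0%N,0%N) p) -> positive_path k n p.
Proof.
move=> hp ht.
have hG : Gpath k n p.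
  apply: (path_G hp); apply/allP => y hy.
  have /andP [h1 h2] := path_le hp hy.
  exact: in_Gamma_le ht h1 h2.
split => // q hq hl.
have := Gpath_size hq; have := Gpath_size hG; rewrite hl /= => -> ; lia.
Qed.

Lemma zip_all (T : eqType) (e : rel T) : forall s a, path e a s ->
  forall u v, (u, v) \in zip (a :: s) s -> e u v.
Proof.
elim=> [|b s IH] a //= /andP [hab hp] u v; rewrite inE => /orP [/eqP [-> ->]//|].
exact: IH.
Qed.

Lemma zip_mid (T : eqType) (b : T) s2 : forall s1 a,
  (last a s1, b) \in zip (a :: s1 ++ b :: s2) (s1 ++ b :: s2).
Proof.
elim=> [|c s1 IH] a /=; first by rewrite inE eqxx.
by rewrite inE IH orbT.
Qed.

Lemma gE_phi R n lam (x : point R) (F : point R -> Prop) u v :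
  F x -> gE n lam x u v -> phiE n lam F u v.
Proof.
case: u v => a b [c d] hx.
case/gE_inv => [[? ? ? h]|[? ? ? h]|[? ? hI hs]|[? ? hI hs]]; subst.
- by left; exists b.
- by right; left; exists a.
- right; right; left; exists a.+1, b; split => //; split => //; split => //.
  by exists x.
- right; right; right; exists a, b.+1; split => //; split => //; split => //.
  by exists x.
Qed.

Theorem lemma2p3 (R : realFieldType) (k : seq nat) (n : nat) (lam : nat -> R)
  (hk : all (fun a => (0 < a)%N) k) (hn : sumn k = n)
  (hlam : lam_adapted k n lam)
  (F : point R -> Prop) (hF : is_face n lam F) :
  forall u v, phiE n lam F u v ->
    exists p, [/\ positive_path k n p, edge_on p u v &
                 forall u' v', edge_on p u' v' -> phiE n lam F u' v'].
Proof.
move=> u v huv.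
have [x [hx he]] : exists x, F x /\ gE n lam x u v.
  have [_ [x0 hx0]] := hF.
  case: huv => [[i [hi [-> ->]]]|[[i [hi [-> ->]]]|[[i [j [hI [-> [-> [x [hx hs]]]]]]]|[i [j [hI [-> [-> [x [hx hs]]]]]]]]]].
  - by exists x0; split => //; apply: gE_ax1.
  - by exists x0; split => //; apply: gE_ax2.
  - exists x; split => //; move: hI hs; case: i => [|i] hI hs; first by [].
    exact: gE_v.
  - exists x; split => //; move: hI hs; case: j => [|j] hI hs; first by move: hI; rewrite /inI andbF.
    exact: gE_h.
have hP : Pineq n lam x.
  have [[w [c [_ hw]]] _] := hF.
  by have [[_ ]] := (hw x).1 hx.
case: u v he {huv} => a b [c d] he.
have [q1 [hq1 hl1]] := back_path hP (erefl _) (back_good hP he).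
have [q2 [hq2 ht]] := fwd_path hP hlam hn (erefl _) (ex_intro _ (a,b) he).
exists (q1 ++ (c,d) :: q2).
have hp : path (gE n lam x) (0%N,0%N) (q1 ++ (c,d) :: q2).
  by rewrite cat_path hq1 hl1 /= he hq2.
split.
- apply: (pos_path hp); by rewrite last_cat hl1.
- by rewrite /edge_on -{1}hl1 zip_mid.
- move=> u' v' /(zip_all hp) h; exact: gE_phi hx h.
Qed.
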